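(* For any weight data $A=(a_1,\dots,a_n)$, the weight assignment $Z_A$ is a smooth extremal assignment.
   Context: $[n]=\{1,\dots,n\}$. A stable $n$-labeled tree is a finite tree with $n$ leaves labeled bijectively by $[n]$, all internal vertices of degree $\ge 3$; $V(G)$ its internal vertices; $S(n)$ the set of such trees up to label-preserving isomorphism and $S_2(n)$ those with exactly 2 internal vertices. $G\rightsquigarrow G'$: $G'$ obtained by collapsing connected sets of internal vertices, inducing surjection $\pi:V(G)\to V(G')$; $v\rightsquigarrow v'$ means $\pi(v)=v'$. An extremal assignment of order $n$: rule $Z(G)\subset V(G)$ for $G\in S(n)$ with (a) $Z(G)\ne V(G)$, (b) if $G\rightsquigarrow G'$ and $\pi^{-1}(v')=\{v_1,\dots,v_k\}$ then $v'\in Z(G')\iff v_1,\dots,v_k\in Z(G)$. $Z$ is smooth if for every $G$ and $v\in Z(G)$ there exist $G'\in S_2(n)$, $v'\in Z(G')$ with $G\rightsquigarrow G'$, $v\rightsquigarrow v'$. Weight data: $A=(a_1,\dots,a_n)$ with $a_i\in\mathbb{Q}$, $0<a_i\le 1$, $\sum a_i>2$. A tail of $G$ is a nonempty connected set $T\subset V(G)$ joined to $V(G)\setminus T$ by exactly one edge; $\ell(T)$ is the set of labels of leaves adjacent to vertices of $T$. The weight assignment is $Z_A(G)=\{v\in V(G):\exists$ a tail $T$ of $G$ with $v\in T$ and $\sum_{i\in\ell(T)}a_i\le 1\}$; it is known to be an extremal assignment. *)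

(* Defs.v *)
From HB Require Import structures.
From mathcomp Require Import all_boot all_order all_algebra.
Set Implicit Arguments. Unset Strict Implicit. Unset Printing Implicit Defensive.
Import Order.TTheory GRing.Theory Num.Theory.

(* A stable n-labeled tree, given by a concrete representative:
   internal vertices 'I_tm, an adjacency relation tadj among internal
   vertices (the internal subtree), and tleaf i = the internal vertex the
   leaf labeled i is attached to. *)
Record stree (n : nat) := STree {
  tm : nat;
  tadj : rel 'I_tm;
  tleaf : 'I_n -> 'I_tm;
  tm_gt0 : 0 < tm;
  tadj_sym : symmetric tadj;
  tadj_irr : irreflexive tadj;
  tconnected : forall u v : 'I_tm, connect tadj u v;
  (* a connected graph with (#vertices - 1) edges is a tree;
     ordered pairs count each edge twice *)
  tedges : #|[set p : 'I_tm * 'I_tm | tadj p.1 p.2]| = (tm - 1).*2;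
  tstable : forall v : 'I_tm,
      3 <= #|[set w | tadj v w]| + #|[set i | tleaf i == v]|
}.

(* G ~> G' via pi : V(G) -> V(G'): pi surjective, its fibres are connected
   sets of internal vertices of G, and G' is the tree obtained by collapsing
   each fibre to a point. *)
Definition contraction n (G G' : stree n) (pi : 'I_(tm G) -> 'I_(tm G')) : Prop :=
  [/\ forall x : 'I_(tm G'), exists v, pi v = x,
      forall (x : 'I_(tm G')) (u v : 'I_(tm G)), pi u = x -> pi v = x ->
        connect (fun a b => [&& tadj a b, pi a == x & pi b == x]) u v,
      forall x y : 'I_(tm G'),
        tadj x y <-> (x <> y /\ exists u v, [/\ pi u = x, pi v = y & tadj u v])
    & forall i : 'I_n, tleaf G' i = pi (tleaf G i)].

Definition assignment n := forall G : stree n, {set 'I_(tm G)}.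

Definition extremal n (Z : assignment n) : Prop :=
  (forall G : stree n, Z G != [set: 'I_(tm G)]) /\
  (forall (G G' : stree n) (pi : 'I_(tm G) -> 'I_(tm G')),
      contraction pi ->
      forall v' : 'I_(tm G'),
        (v' \in Z G') <-> (forall v, pi v = v' -> v \in Z G)).

Definition smooth n (Z : assignment n) : Prop :=
  forall (G : stree n) (v : 'I_(tm G)), v \in Z G ->
    exists (G' : stree n) (pi : 'I_(tm G) -> 'I_(tm G')),
      [/\ tm G' = 2, contraction pi & pi v \in Z G'].

Definition is_tail n (G : stree n) (T : {set 'I_(tm G)}) : bool :=
  [&& T != set0,
      [forall u in T, forall v in T,
        connect (fun a b => [&& tadj a b, a \in T & b \in T]) u v]
    & #|[set p : 'I_(tm G) * 'I_(tm G) |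
          [&& tadj p.1 p.2, p.1 \in T & p.2 \notin T]]| == 1].

Definition tail_labels n (G : stree n) (T : {set 'I_(tm G)}) : {set 'I_n} :=
  [set i | tleaf G i \in T].

Definition weight_data n (a : 'I_n -> rat) : Prop :=
  (forall i, 0 < a i <= 1)%R /\ (2 < \sum_(i < n) a i)%R.

Definition ZA n (a : 'I_n -> rat) : assignment n :=
  fun G => [set v | [exists T : {set 'I_(tm G)},
      [&& is_tail T, v \in T & (\sum_(i in tail_labels T) a i <= 1)%R] ] ].

(* Main.v *)
Require Import Defs.
From mathcomp Require Import all_boot all_order all_algebra zify.
Import Order.TTheory GRing.Theory Num.Theory.

Section Generic.
Variable T : finType.
Implicit Types (e : rel T) (P : pred T).

Lemma connect_inv e P x y : P x -> (forall a b, P a -> e a b -> P b) ->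
  connect e x y -> P y.
Proof.
move=> Px cl /connectP [p pth ->]; elim: p x Px pth => //= z p IH x Px.
by case/andP=> exz pz; apply: IH (cl x z Px exz) pz.
Qed.

Lemma connect_restr e e' P x y : P x ->
  (forall a b, P a -> e a b -> P b /\ e' a b) ->
  connect e x y -> connect e' x y.
Proof.
move=> Px cl cxy.
suff /andP [] : P y && connect e' x y by [].
apply: (@connect_inv e (fun z => P z && connect e' x z) x y) => //.
  by rewrite Px connect0.
move=> a b /andP [Pa ca] eab.
have [Pb e'ab] := cl a b Pa eab.
by rewrite Pb (connect_trans ca (connect1 e'ab)).
Qed.

Lemma first_entry e (Q : pred T) v z : connect e v z -> Q v -> ~~ Q z ->
  exists b a, [/\ Q b, ~~ Q a, e b a &
     connect (fun x y => [&& e x y, Q x & Q y]) v b].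
Proof.
move/connectP=> [p pth ->]; elim: p v pth => [|x p IH] v /= pth Qv nQ.
  by rewrite Qv in nQ.
case/andP: pth => evx px; case Qx: (Q x).
  have [b [a [Qb nQa eba cxb]]] := IH x px Qx nQ.
  exists b, a; split=> //; apply: connect_trans cxb.
  by apply: connect1; rewrite evx Qv Qx.
by exists v, x; rewrite Qx.
Qed.

End Generic.

Lemma connect_map (T T' : finType) (e : rel T) (e' : rel T') (f : T -> T') x y :
  (forall a b, e a b -> f a = f b \/ e' (f a) (f b)) ->
  connect e x y -> connect e' (f x) (f y).
Proof.
move=> H cxy.
apply: (@connect_inv T e (fun z => connect e' (f x) (f z)) x y) => //.
move=> a b ca /H [<- //| e'ab]; exact: connect_trans ca (connect1 e'ab).
Qed.

Section K.
Variable T : finType.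
Variable e : rel T.
Hypothesis esym : symmetric e.

Definition pairs (R : {set T}) := [set p : T * T | [&& e p.1 p.2, p.1 \in R & p.2 \in R]].

Lemma pairs_sub (R R' : {set T}) : R \subset R' -> pairs R \subset pairs R'.
Proof.
move=> sRR'; apply/subsetP=> p; rewrite !inE => /and3P [-> a b].
by rewrite (subsetP sRR' _ a) (subsetP sRR' _ b).
Qed.

Lemma edges_lb (C : {set T}) c : c \in C ->
  (forall z, z \in C -> connect (fun a b => [&& e a b, a \in C & b \in C]) c z) ->
  (#|C| - 1).*2 <= #|pairs C|.
Proof.
move=> cC conn.
have main : forall k, k < #|C| -> exists R : {set T},
   [/\ c \in R, R \subset C, #|R| = k.+1 & k.*2 <= #|pairs R|].
  elim=> [|k IH] hk.
    by exists [set c]; rewrite set11 sub1set cC cards1.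
  have [R [cR sRC cardR pR]] := IH (ltnW hk).
  have [z zC zR] : exists2 z, z \in C & z \notin R.
    apply/exists_inP; rewrite -negb_forall_in; apply/negP => /forall_inP H.
    have : C \subset R by apply/subsetP=> x /H.
    by move/subset_leq_card; rewrite cardR leqNgt hk.
  have [b [x [bR xR ebx cb]]] := @first_entry T _ (fun y => y \in R) _ _ (conn z zC) cR zR.
  case/and3P: ebx => ebx bC xC.
  exists (x |: R); split.
  - by rewrite inE cR orbT.
  - by rewrite subUset sub1set xC sRC.
  - by rewrite cardsU1 xR cardR.
  have sub : (x, b) |: ((b, x) |: pairs R) \subset pairs (x |: R).
    rewrite !subUset !sub1set !inE /= ebx esym ebx !eqxx bR !orbT /=.
    by apply: pairs_sub; apply/subsetP=> y yR; rewrite inE yR orbT.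
  apply: leq_trans (subset_leq_card sub).
  rewrite !cardsU1 !inE /= negb_or.
  have xb : x != b by apply/eqP=> xb; rewrite xb bR in xR.
  rewrite (negbTE xR) !andbF /=.
  have -> : (x, b) != (b, x) by rewrite xpair_eqE negb_and xb.
  by rewrite doubleS add1n add1n !ltnS.
have C0 : 0 < #|C| by apply/card_gt0P; exists c.
have hk : #|C| - 1 < #|C| by rewrite subn1 prednK.
have [R [cR sRC cardR pR]] := main (#|C| - 1) hk.
have CR : C = R.
  apply/eqP; rewrite eq_sym eqEcard sRC cardR subn1 prednK // leqnn; exact: isT.
by move: pR; rewrite CR.
Qed.
End K.

Section Tree.
Set Implicit Arguments. Unset Strict Implicit.
Variables (n : nat) (G : stree n).
Local Notation V := 'I_(tm G).
Local Notation adj := (@tadj n G).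

Definition er (t w : V) : rel V :=
  fun x y => adj x y && ~~ ((x == t) && (y == w) || (x == w) && (y == t)).
Definition S (t w : V) : {set V} := [set x | connect (er t w) t x].
Definition restr (A : {set V}) : rel V := fun x y => [&& adj x y, x \in A & y \in A].

Lemma adj_sym x y : adj x y = adj y x.
Proof. exact: tadj_sym. Qed.

Lemma adj_neq x y : adj x y -> x != y.
Proof. by apply: contraTneq => ->; rewrite tadj_irr. Qed.

Lemma er_sym t w : symmetric (er t w).
Proof.
move=> x y; rewrite /er adj_sym; congr (_ && ~~ _).
by case: (x == t); case: (y == w); case: (x == w); case: (y == t).
Qed.

Lemma erC t w x y : er t w x y = er w t x y.
Proof. by rewrite /er orbC. Qed.

Lemma erC2 t w : er t w =2 er w t.
Proof. by move=> x y; apply: erC. Qed.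

Lemma er_adj t w x y : er t w x y -> adj x y.
Proof. by case/andP. Qed.

Lemma restr_sym A : symmetric (restr A).
Proof. by move=> x y; rewrite /restr adj_sym [(x \in A) && _]andbC. Qed.

Lemma S_t t w : t \in S t w.
Proof. by rewrite inE connect0. Qed.

Lemma S_trans t w x y : x \in S t w -> connect (er t w) x y -> y \in S t w.
Proof. by rewrite !inE => cx cy; apply: connect_trans cx cy. Qed.

Lemma S_step t w x y : x \in S t w -> er t w x y -> y \in S t w.
Proof. by move=> xS exy; apply: S_trans xS (connect1 exy). Qed.

Lemma S_back t w x : x \in S t w -> connect (er t w) x t.
Proof. by rewrite inE (sym_connect_sym (@er_sym t w)). Qed.

Lemma SC t w : S t w = [set x | connect (er w t) t x].
Proof. by apply/setP=> x; rewrite !inE (eq_connect (erC2 t w)). Qed.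

Lemma acyclic t w : adj t w -> w \notin S t w.
Proof.
move=> atw; apply/negP; rewrite inE => ctw.
have conn : forall z, connect (er t w) t z.
  move=> z; move: (@tconnected n G t z); apply: connect_sub => x y axy.
  case exy: (er t w x y); first exact: connect1.
  move: exy; rewrite /er axy /= => /negbFE /orP [] /andP [/eqP -> /eqP ->] //.
  by rewrite (sym_connect_sym (@er_sym t w)).
have := @edges_lb _ (er t w) (@er_sym t w) [set: V] t (in_setT t).
have -> : #|[set: V]| = tm G by rewrite cardsT card_ord.
have /[swap]/[apply] : forall z, z \in [set: V] ->
    connect (fun a b => [&& er t w a b, a \in [set: V] & b \in [set: V]]) t z.
  move=> z _; have := conn z; apply: connect_sub => x y exy.
  by apply: connect1; rewrite !in_setT exy.
move=> H.
have sub : (t, w) |: ((w, t) |: @pairs _ (er t w) [set: V])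
   \subset [set p : V * V | adj p.1 p.2].
  rewrite !subUset !sub1set !inE /= atw adj_sym atw /=.
  by apply/subsetP=> p; rewrite !inE => /andP [/er_adj].
have tw := adj_neq atw.
have e1 : er t w t w = false by rewrite /er !eqxx /= andbF.
have e2 : er t w w t = false by rewrite /er !eqxx /= orbT andbF.
have e3 : ((t, w) == (w, t)) = false by rewrite xpair_eqE (negbTE tw).
have := subset_leq_card sub; rewrite (tedges G) !cardsU1 !inE /= e1 e2 e3 /=.
rewrite add1n add1n => H2; have := leq_trans H2 H.
by rewrite ltnNge leqW.
Qed.

Lemma partition t w x : adj t w -> (x \in S t w) || (x \in S w t).
Proof.
move=> atw; apply: (@connect_inv _ adj (fun z => (z \in S t w) || (z \in S w t)) t x _ _ (@tconnected n G t x)).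
  by rewrite S_t.
move=> u v /orP [uS|uS] auv; case euv: (er t w u v).
- by rewrite (S_step uS euv).
- move: euv; rewrite /er auv /= => /negbFE /orP [] /andP [_ /eqP ->].
    by rewrite S_t orbT.
  by rewrite S_t.
- by rewrite erC in euv; rewrite (S_step uS euv) orbT.
- move: euv; rewrite /er auv /= => /negbFE /orP [] /andP [_ /eqP ->].
    by rewrite S_t orbT.
  by rewrite S_t.
Qed.

Lemma disjoint t w x : adj t w -> x \in S t w -> x \notin S w t.
Proof.
move=> atw xS; apply/negP => xS'.
have := acyclic atw; rewrite inE; apply/negP/negPn.
rewrite SC in xS'; rewrite inE in xS; rewrite inE in xS'.
apply: connect_trans xS _.
by rewrite (sym_connect_sym (@er_sym t w)). 
Qed.

Lemma boundary t w x y : adj t w -> x \in S t w -> adj x y -> y \notin S t w ->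
  (x == t) && (y == w).
Proof.
move=> atw xS axy yS; case exy: (er t w x y).
  by rewrite (S_step xS exy) in yS.
move: exy; rewrite /er axy /= => /negbFE /orP [] // /andP [/eqP xw _].
by rewrite xw in xS; rewrite (negbTE (acyclic atw)) in xS.
Qed.

Lemma S_restr t w u v : u \in S t w -> v \in S t w -> connect (restr (S t w)) u v.
Proof.
have H : forall z, z \in S t w -> connect (restr (S t w)) t z.
  move=> z; rewrite inE => cz.
  apply: (@connect_restr _ (er t w) _ (fun x => x \in S t w) _ _ (S_t t w) _ cz).
  move=> a b aS eab; have bS := S_step aS eab.
  by split=> //; rewrite /restr (er_adj eab) aS bS.
move=> uS vS; apply: connect_trans (H v vS).
by rewrite (sym_connect_sym (@restr_sym _)); apply: H.
Qed.

Lemma tail_S t w : adj t w -> is_tail (S t w).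
Proof.
move=> atw; apply/and3P; split.
- by apply/set0Pn; exists t; apply: S_t.
- by apply/forall_inP=> u uS; apply/forall_inP=> v vS; apply: S_restr.
apply/cards1P; exists (t, w); apply/setP=> [[x y]]; rewrite !inE /=.
apply/idP/idP.
  case/and3P=> axy xS yS; have := @boundary t w x y atw; rewrite !inE xpair_eqE; exact.
move=> /eqP [-> ->]; rewrite atw connect0 /=; have := acyclic atw; rewrite inE. exact.
Qed.

Lemma S_tail (T : {set V}) : is_tail T -> exists t w, adj t w /\ T = S t w.
Proof.
case/and3P=> _ /forall_inP Tconn /cards1P [[t w] Bd].
have : (t, w) \in [set p : V * V | [&& adj p.1 p.2, p.1 \in T & p.2 \notin T]].
  by rewrite Bd set11.
rewrite inE /= => /and3P [atw tT wT].
exists t, w; split=> //; apply/setP=> x; apply/idP/idP => xin.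
  rewrite inE; have := forall_inP (Tconn t tT) x xin; apply: connect_sub.
  move=> a b /and3P [aab aT bT]; apply: connect1; rewrite /er aab /=.
  apply/negP=> /orP [] /andP [/eqP ea /eqP eb].
    by move: bT; rewrite eb (negbTE wT).
  by move: aT; rewrite ea (negbTE wT).
rewrite inE in xin; apply: (@connect_inv _ (er t w) (fun z => z \in T) t x) => //.
move=> a b aT eab; apply/negPn/negP => bT.
have : (a, b) \in [set p : V * V | [&& adj p.1 p.2, p.1 \in T & p.2 \notin T]].
  by rewrite inE /= aT bT (er_adj eab).
rewrite Bd inE xpair_eqE => /andP [/eqP at_ /eqP bw].
by move: eab; rewrite /er at_ bw !eqxx andbF.
Qed.

Lemma Nsub t w x y : x \notin S t w -> y \notin S t w -> t \in S x y ->
  S t w \subset S x y.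
Proof.
move=> xS yS tS; apply/subsetP=> z; rewrite inE => cz.
apply: S_trans tS _.
apply: (@connect_restr _ (er t w) _ (fun u => u \in S t w) _ _ (S_t t w) _ cz).
move=> u v uS euv; have vS := S_step uS euv; split=> //.
rewrite /er (er_adj euv) /=.
have ux : (u == x) = false by apply/negP=> /eqP ux; rewrite -ux uS in xS.
have uy : (u == y) = false by apply/negP=> /eqP uy; rewrite -uy uS in yS.
by rewrite ux uy.
Qed.

Variable a : 'I_n -> rat.
Definition light (A : {set V}) : bool := (\sum_(i in tail_labels A) a i <= 1)%R.

Lemma ZA_S v : (v \in ZA a G) <-> exists t w, [/\ adj t w, v \in S t w & light (S t w)].
Proof.
split.
  rewrite inE => /existsP [T /and3P [tT vT lT]].
  have [t [w [atw eT]]] := S_tail tT.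
  by exists t, w; rewrite -eT.
move=> [t [w [atw vS lS]]]; rewrite inE; apply/existsP; exists (S t w).
by rewrite (tail_S atw) vS.
Qed.

Hypothesis apos : forall i, (0 <= a i)%R.
Hypothesis atot : (2 < \sum_i a i)%R.

Lemma light_sub (A B : {set V}) : A \subset B -> light B -> light A.
Proof.
move=> sAB; apply: le_trans.
rewrite [X in (X <= _)%R]big_mkcond [X in (_ <= X)%R]big_mkcond /=.
apply: ler_sum => i _; rewrite !inE.
case: ifP => h; first by rewrite (subsetP sAB _ h).
by case: ifP.
Qed.

Lemma cover_false (A B : {set V}) : (forall z, (z \in A) || (z \in B)) -> light A -> light B -> False.
Proof.
move=> cov lA lB.
have H : (\sum_i a i <= \sum_(i in tail_labels A) a i + \sum_(i in tail_labels B) a i)%R.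
  rewrite [X in (_ <= X + _)%R]big_mkcond [X in (_ <= _ + X)%R]big_mkcond /=.
  rewrite -big_split /=; apply: ler_sum => i _; rewrite !inE.
  case hA: (tleaf G i \in A); case hB: (tleaf G i \in B).
  - by rewrite lerDl.
  - by rewrite addr0.
  - by rewrite add0r.
  - by have := cov (tleaf G i); rewrite hA hB.
have : (\sum_i a i <= 2)%R.
  apply: le_trans H _; rewrite -[2%R]/(1 + 1)%R; exact: lerD.
by rewrite leNgt atot.
Qed.

Lemma grow t w x y : adj t w -> light (S t w) -> adj x y -> light (S x y) ->
  w \in S x y -> S t w \proper S x y.
Proof.
move=> atw lt axy lxy wS.
case xS: (x \in S t w); case yS: (y \in S t w).
- have xS' := disjoint atw xS; have yS' := disjoint atw yS.
  have sub := Nsub xS' yS' wS.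
  exfalso; apply: (cover_false (A := S t w) (B := S x y)) => // z.
  have := partition z atw; case/orP=> [->//|zS]; by rewrite (subsetP sub _ zS) orbT.
- have := boundary atw xS axy (negbT yS) => /andP [/eqP ex /eqP ey].
  by move: wS; rewrite ex ey (negbTE (acyclic atw)).
- rewrite adj_sym in axy.
  have := boundary atw yS axy (negbT xS) => /andP [/eqP ey /eqP ex].
  exfalso; apply: (cover_false (A := S t w) (B := S x y)) => // z.
  rewrite ex ey; have := partition z atw; case/orP=> ->; by rewrite ?orbT.
- have tS : t \in S x y.
    apply: S_step wS _; rewrite /er adj_sym atw /=.
    have tx : (t == x) = false by apply/negP=> /eqP tx; rewrite -tx S_t in xS.
    have ty : (t == y) = false by apply/negP=> /eqP ty; rewrite -ty S_t in yS.
    by rewrite tx ty !andbF.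
  rewrite properE Nsub ?xS ?yS //=.
  apply/negP=> /subsetP /(_ w wS); by rewrite (negbTE (acyclic atw)).
Qed.

Lemma step1 (F : {set V}) f0 : f0 \in F ->
  (forall u v, u \in F -> v \in F -> connect (restr F) u v) ->
  (forall z, z \in F -> exists t w, [/\ adj t w, z \in S t w & light (S t w)]) ->
  exists t w, [/\ adj t w, F \subset S t w & light (S t w)].
Proof.
move=> f0F Fconn FZ.
pose Q (p : V * V) := [&& adj p.1 p.2, light (S p.1 p.2) & [exists z in F, z \in S p.1 p.2]].
have [t0 [w0 [a0 s0 l0]]] := FZ f0 f0F.
have Q0 : Q (t0, w0) by rewrite /Q /= a0 l0 /=; apply/exists_inP; exists f0.
case: (arg_maxnP (fun p => #|S p.1 p.2|) Q0) => [[t w]] /and3P [/= atw lt /exists_inP [g gF gS]] maxp.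
exists t, w; split=> //; apply/subsetP => f fF; apply/negPn/negP => fS.
have wF : w \in F.
  apply/negPn/negP => wF; move: fS; rewrite (S_trans gS) //.
  move: (Fconn g f gF fF); apply: connect_sub => u v /and3P [auv uF vF].
  apply: connect1; rewrite /er auv /=; apply/negP => /orP [] /andP [/eqP eu /eqP ev].
    by move: vF; rewrite ev (negbTE wF).
  by move: uF; rewrite eu (negbTE wF).
have [x [y [axy wS' ly]]] := FZ w wF.
have pr := grow atw lt axy ly wS'.
have : Q (x, y) by rewrite /Q /= axy ly /=; apply/exists_inP; exists w.
move/maxp => /=; rewrite leqNgt => /negP; apply; exact: proper_card.
Qed.

Lemma step2 (F : {set V}) f0 t w : f0 \in F ->
  (forall u v, u \in F -> v \in F -> connect (restr F) u v) ->
  adj t w -> F \subset S t w -> light (S t w) ->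
  exists p q, [/\ adj p q, p \in F, F \subset S p q & light (S p q)].
Proof.
move=> f0F Fconn atw FS0 l0.
pose Q (p : V * V) := [&& adj p.1 p.2, light (S p.1 p.2) & F \subset S p.1 p.2].
have Q0 : Q (t, w) by rewrite /Q /= atw l0.
case: (arg_minnP (fun p => #|S p.1 p.2|) Q0) => [[p q]] /and3P [/= apq lpq FS] minp.
exists p, q; split=> //; apply/negPn/negP => pF.
have f0S := subsetP FS f0 f0F; rewrite inE in f0S.
have nf : ~~ ~~ (f0 \in F) by rewrite f0F.
have [b [x [bF xF ebx cpb]]] := @first_entry _ (er p q) (fun z => z \notin F) _ _ f0S pF nf.
rewrite negbK in xF.
have axb : adj x b by rewrite adj_sym (er_adj ebx).
have FS' : F \subset S x b.
  apply/subsetP => f fF; rewrite inE; move: (Fconn x f xF fF); apply: connect_sub.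
  move=> u v /and3P [auv uF vF]; apply: connect1; rewrite /er auv /=.
  apply/negP => /orP [] /andP [/eqP eu /eqP ev].
    by move: vF; rewrite ev (negbTE bF).
  by move: uF; rewrite eu (negbTE bF).
have cpb' : connect (er x b) p b.
  move: cpb; apply: connect_sub => u v /and3P [euv uF vF]; apply: connect1.
  rewrite /er (er_adj euv) /=; apply/negP => /orP [] /andP [/eqP eu /eqP ev].
    by move: uF; rewrite eu xF.
  by move: vF; rewrite ev xF.
have pS : p \in S b x.
  rewrite inE (eq_connect (erC2 b x)) (sym_connect_sym (@er_sym x b)) //.
have abx : adj b x by rewrite adj_sym.
have pnS : p \notin S x b := disjoint abx pS.
have qS : q \in S b x.
  apply: S_step pS _; rewrite /er apq /=; apply/negP => /orP [] /andP [/eqP eu /eqP ev].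
    have : q \in S p q by rewrite {1}ev (subsetP FS _ xF).
    by rewrite (negbTE (acyclic apq)).
  by move: pF; rewrite eu xF.
have qnS : q \notin S x b := disjoint abx qS.
have sub : S x b \subset S p q := Nsub pnS qnS (subsetP FS _ xF).
have : Q (x, b) by rewrite /Q /= axb FS' andbT; apply: light_sub sub lpq.
move/minp => /=; rewrite leqNgt => /negP; apply; apply: proper_card.
rewrite properE sub /=; apply/negP => /subsetP /(_ p (S_t p q)).
by rewrite (negbTE pnS).
Qed.

End Tree.

Section Contr.
Set Implicit Arguments. Unset Strict Implicit.
Variables (n : nat) (G G' : stree n) (pi : 'I_(tm G) -> 'I_(tm G')).
Hypothesis cpi : contraction pi.
Local Notation V := 'I_(tm G).
Local Notation V' := 'I_(tm G').

Lemma pi_surj x : exists v, pi v = x.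
Proof. by case: cpi => H _ _ _; apply: H. Qed.

Lemma fib_sub (x : V') (e : rel V) u v : pi u = x -> pi v = x ->
  (forall c d, tadj c d -> pi c = x -> pi d = x -> e c d) -> connect e u v.
Proof.
case: cpi => _ H _ _ pu pv He; move: (H x u v pu pv); apply: connect_sub.
by move=> c d /and3P [acd /eqP pc /eqP pd]; apply: connect1; apply: He.
Qed.

Lemma adj_iff x y : tadj x y <-> (x <> y /\ exists u v, [/\ pi u = x, pi v = y & tadj u v]).
Proof. by case: cpi => _ _ H _; apply: H. Qed.

Lemma leafE i : tleaf G' i = pi (tleaf G i).
Proof. by case: cpi => _ _ _ H; apply: H. Qed.

Lemma adj_img c d : tadj c d -> pi c <> pi d -> tadj (pi c) (pi d).
Proof. by move=> acd ne; apply/adj_iff; split=> //; exists c, d. Qed.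

Lemma lift_unique x y c d : tadj x y -> pi x <> pi y -> pi c = pi x -> pi d = pi y ->
  er x y c d -> False.
Proof.
move=> axy nxy pc pd ecd.
have : y \in S x y.
  rewrite inE; apply: (@connect_trans _ _ c).
    apply: (@fib_sub (pi x)) => // c' d' acd pc' pd'.
    rewrite /er acd /=; apply/negP => /orP [] /andP [/eqP ec /eqP ed].
      by apply: nxy; rewrite -pd' ed.
    by apply: nxy; rewrite -pc' ec.
  apply: connect_trans (connect1 ecd) _.
  apply: (@fib_sub (pi y)) => // c' d' acd pc' pd'.
  rewrite /er acd /=; apply/negP => /orP [] /andP [/eqP ec /eqP ed].
    by apply: nxy; rewrite -ec pc'.
  by apply: nxy; rewrite -ed pd'.
by rewrite (negbTE (acyclic axy)).
Qed.

Variable a : 'I_n -> rat.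
Hypothesis apos : forall i, (0 <= a i)%R.
Hypothesis atot : (2 < \sum_i a i)%R.

Lemma forward v : pi v \in ZA a G' -> v \in ZA a G.
Proof.
rewrite inE => /existsP [T' /and3P [tT vT lT]].
case/and3P: tT => _ _ /cards1P [[t' w'] Bd].
have : (t', w') \in [set p : V' * V' | [&& tadj p.1 p.2, p.1 \in T' & p.2 \notin T']].
  by rewrite Bd set11.
rewrite inE /= => /and3P [atw tT wT].
have [_ [x [y [px py axy]]]] := proj1 (adj_iff t' w') atw.
have nxy : pi x <> pi y by move=> e; move: tT; rewrite -px e py (negbTE wT).
have bd : forall c d, tadj c d -> pi c \in T' -> pi d \notin T' -> pi c = t' /\ pi d = w'.
  move=> c d acd cT dT.
  have ne : pi c <> pi d by move=> e; move: cT; rewrite e (negbTE dT).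
  have : (pi c, pi d) \in [set p : V' * V' | [&& tadj p.1 p.2, p.1 \in T' & p.2 \notin T']].
    by rewrite inE /= cT dT adj_img.
  by rewrite Bd inE xpair_eqE => /andP [/eqP -> /eqP ->].
have C1 : forall z, z \in S x y -> pi z \in T'.
  move=> z; rewrite inE; apply: (@connect_inv _ _ (fun z => pi z \in T')).
    by rewrite px.
  move=> c d cT ecd; apply/negPn/negP => dT.
  have [ec ed] := bd c d (er_adj ecd) cT dT.
  by apply: (lift_unique axy nxy _ _ ecd); rewrite ?ec ?ed.
have C2 : forall z, z \in S y x -> pi z \notin T'.
  move=> z; rewrite inE; apply: (@connect_inv _ _ (fun z => pi z \notin T')).
    by rewrite py.
  move=> c d cT ecd; apply/negP => dT.
  rewrite er_sym in ecd.
  have [ed ec] := bd d c (er_adj ecd) dT cT.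
  have ecd' : er x y d c by rewrite erC.
  by apply: (lift_unique axy nxy _ _ ecd'); rewrite ?ec ?ed.
have vS : v \in S x y.
  by have := partition v axy; case/orP => // /C2; rewrite vT.
apply/(ZA_S a v); exists x, y; split=> //.
apply: le_trans lT.
rewrite [X in (X <= _)%R]big_mkcond [X in (_ <= X)%R]big_mkcond /=.
apply: ler_sum => i _; rewrite !inE leafE.
case: ifP => h; first by rewrite (C1 _ (_ : _ \in S x y)) ?inE.
by case: ifP.
Qed.

Lemma converse v' : (forall v, pi v = v' -> v \in ZA a G) -> v' \in ZA a G'.
Proof.
move=> H.
pose F := [set z | pi z == v'].
have [f0 pf0] := pi_surj v'.
have f0F : f0 \in F by rewrite inE pf0.
have Fconn : forall u v, u \in F -> v \in F -> connect (restr F) u v.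
  move=> u v; rewrite !inE => /eqP pu /eqP pv; apply: (fib_sub pu pv).
  by move=> c d acd pc pd; rewrite /restr acd !inE pc pd eqxx.
have FZ : forall z, z \in F -> exists t w, [/\ tadj t w, z \in S t w & light a (S t w)].
  by move=> z; rewrite inE => /eqP pz; apply/(ZA_S a z); apply: H.
have [t [w [atw FS lS]]] := step1 apos atot f0F Fconn FZ.
have [p [q [apq pF FS' lpq]]] := step2 apos f0F Fconn atw FS lS.
have qF : q \notin F.
  by apply/negP => /(subsetP FS'); rewrite (negbTE (acyclic apq)).
have pp : pi p = v' by move: pF; rewrite inE => /eqP.
have npq : pi p <> pi q by move=> e; move: qF; rewrite inE -e pp eqxx.
have U : forall z z', z \in S p q -> pi z' = pi z -> z' \in S p q.
  move=> z z' zS e; apply: S_trans zS _.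
  apply: (@fib_sub (pi z)) => // c d acd pc pd.
  rewrite /er acd /=; apply/negP => /orP [] /andP [/eqP ec /eqP ed].
    by apply: npq; rewrite -ec -ed pc pd.
  by apply: npq; rewrite -ec -ed pc pd.
pose T' := [set x' | [exists z, (z \in S p q) && (pi z == x')]].
have memT : forall z, (pi z \in T') = (z \in S p q).
  move=> z; rewrite inE; apply/existsP/idP => [[z'' /andP [zS /eqP e]]|zS].
    exact: U zS (esym e).
  by exists z; rewrite zS eqxx.
have tT : is_tail T'.
  apply/and3P; split.
  - by apply/set0Pn; exists (pi p); rewrite memT S_t.
  - apply/forall_inP=> u' uT; apply/forall_inP=> w' vT.
    have [u pu] := pi_surj u'; have [v pv] := pi_surj w'.
    rewrite -pu -pv; rewrite -pu memT in uT; rewrite -pv memT in vT.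
    apply: (@connect_map _ _ _ _ pi _ _ _ (S_restr uT vT)) => c d /and3P [acd cS dS].
    case: (pi c =P pi d) => [->|ne]; first by left.
    by right; rewrite adj_img // !memT cS dS.
  apply/cards1P; exists (pi p, pi q); apply/setP => [[x' y']]; rewrite inE in_set1 /=.
  apply/idP/idP.
    case/and3P => axy xT yT.
    have [_ [c [d [pc pd acd]]]] := proj1 (adj_iff x' y') axy.
    rewrite -pc memT in xT; rewrite -pd memT in yT.
    have /andP [/eqP ec /eqP ed] := boundary apq xT acd yT.
    by rewrite -pc -pd ec ed eqxx.
  case/eqP => -> ->; rewrite adj_img // !memT S_t.
  by rewrite (acyclic apq).
rewrite inE; apply/existsP; exists T'; rewrite tT -pp memT S_t /=.
have -> : tail_labels T' = tail_labels (S p q).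
  apply/setP => i; rewrite /tail_labels [in LHS]in_set leafE memT.
  by rewrite [in RHS]in_set.
exact: lpq.
Qed.
End Contr.

Definition o1 : 'I_2 := @Ordinal 2 1 isT.
Lemma ord2 (x : 'I_2) : x = ord0 \/ x = o1.
Proof. by case: x => [[|[|m]]] h; [left; apply: val_inj|right; apply: val_inj|]. Qed.

Section Leaves.
Set Implicit Arguments. Unset Strict Implicit.
Variables (n : nat) (G : stree n).
Local Notation V := 'I_(tm G).
Local Notation adj := (@tadj n G).

Lemma compS t w : adj t w -> S w t = ~: S t w.
Proof.
move=> atw; apply/setP => z; rewrite in_setC.
have := partition z atw; case zS: (z \in S t w) => /=.
  by rewrite (negbTE (disjoint atw zS)).
by move=> ->.
Qed.

Lemma tail_leaves t w : adj t w -> 2 <= #|[set i | tleaf G i \in S t w]|.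
Proof.
move=> atw.
set L := #|[set i | tleaf G i \in S t w]|.
have awt : adj w t by rewrite adj_sym.
have cardSC : #|S t w| + #|S w t| = tm G by rewrite (compS atw) cardsC card_ord.
have S1 : 0 < #|S t w| by apply/card_gt0P; exists t; apply: S_t.
have C1 : 0 < #|S w t| by apply/card_gt0P; exists w; apply: S_t.
set pS := #|@pairs _ adj (S t w)|.
set pC := #|@pairs _ adj (S w t)|.
have KC : (#|S w t| - 1).*2 <= pC.
  apply: (@edges_lb _ _ (@tadj_sym _ G) _ w (S_t w t)) => z zS.
  exact: (S_restr (S_t w t) zS).
have tot : pS + pC + 2 <= (tm G - 1).*2.
  rewrite -(tedges G).
  have sub : (t, w) |: ((w, t) |: (@pairs _ adj (S t w) :|: @pairs _ adj (S w t)))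
     \subset [set p : V * V | adj p.1 p.2].
    rewrite !subUset !sub1set !inE /= atw awt /=.
    by apply/andP; split; apply/subsetP => p; rewrite !inE => /andP [].
  apply: (leq_trans _ (subset_leq_card sub)).
  have dis : [disjoint @pairs _ adj (S t w) & @pairs _ adj (S w t)].
    apply/pred0P => p /=; rewrite !inE; apply/negP => /andP [/and3P [_ p1 _] /and3P [_ p1' _]].
    have h1 : p.1 \in S t w by rewrite inE.
    have h2 : p.1 \in S w t by rewrite inE.
    by rewrite (negbTE (disjoint atw h1)) in h2.
  have wS : (w \in S t w) = false by apply/negbTE/acyclic.
  have tS : (t \in S w t) = false by apply/negbTE/acyclic.
  have nwt : (w, t) \notin @pairs _ adj (S t w) :|: @pairs _ adj (S w t).
    rewrite in_setU negb_or; apply/andP; split; rewrite [_ \in pairs _ _ _]inE /= ?wS ?tS /= ?andbF //.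
  have ntw : (t, w) \notin (w, t) |: (@pairs _ adj (S t w) :|: @pairs _ adj (S w t)).
    rewrite in_setU1 negb_or xpair_eqE (negbTE (adj_neq atw)) /=.
    rewrite in_setU negb_or; apply/andP; split; rewrite [_ \in pairs _ _ _]inE /= ?wS ?tS /= ?andbF //.
  rewrite !cardsU1 ntw nwt (cardsU _ _) (disjoint_setI0 dis) cards0 subn0.
  by rewrite /pS /pC; lia.
have outS : \sum_(v in S t w) #|[set u | adj v u]| <= pS + 1.
  have -> : \sum_(v in S t w) #|[set u | adj v u]| = #|[set p : V * V | (p.1 \in S t w) && adj p.1 p.2]|.
    rewrite -sum1dep_card -(pair_big_dep (fun v => v \in S t w) (fun v u => adj v u) (fun _ _ => 1)).
    by apply: eq_bigr => v _; rewrite sum1dep_card.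
  have sub : [set p : V * V | (p.1 \in S t w) && adj p.1 p.2] \subset (t, w) |: @pairs _ adj (S t w).
    apply/subsetP => [[x y]]; rewrite inE /= => /andP [xS axy].
    rewrite in_setU1 [_ \in pairs _ _ _]inE /=.
    case yS: (y \in S t w); first by rewrite axy xS orbT.
    by rewrite xpair_eqE (boundary atw xS axy) // yS.
  apply: leq_trans (subset_leq_card sub) _.
  by rewrite cardsU1 addnC leq_add2l leq_b1.
have leavesS : \sum_(v in S t w) #|[set i | tleaf G i == v]| = L.
  rewrite /L -sum1dep_card.
  rewrite (partition_big (tleaf G) (fun v => v \in S t w)) //=.
  apply: eq_bigr => v vS; rewrite -sum1dep_card; apply: eq_bigl => i.
  by case: (tleaf G i =P v) => [->|]; rewrite ?vS ?andbF.
have stab : 3 * #|S t w| <= \sum_(v in S t w) #|[set u | adj v u]| + L.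
  rewrite -leavesS -big_split /= mulnC -sum_nat_const.
  by apply: leq_sum => v _; apply: tstable.
lia.
Qed.
End Leaves.

Section Smooth.
Variables (n : nat) (G : stree n) (t w : 'I_(tm G)).
Hypothesis atw : tadj t w.
Local Notation V := 'I_(tm G).

Definition pi2 (z : V) : 'I_2 := if z \in S t w then ord0 else o1.
Definition adj2 : rel 'I_2 := fun x y => x != y.

Lemma pi2_0 z : (pi2 z == ord0) = (z \in S t w).
Proof. by rewrite /pi2; case: (z \in S t w). Qed.

Lemma pi2_1 z : (pi2 z == o1) = (z \in S w t).
Proof.
rewrite (compS atw) in_setC /pi2; by case: (z \in S t w).
Qed.

Lemma adj2_sym : symmetric adj2.
Proof. by move=> x y; rewrite /adj2 eq_sym. Qed.
Lemma adj2_irr : irreflexive adj2.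
Proof. by move=> x; rewrite /adj2 eqxx. Qed.
Lemma adj2_conn : forall u v : 'I_2, connect adj2 u v.
Proof.
move=> u v; case: (eqVneq u v) => [->|uv]; first exact: connect0.
exact: connect1.
Qed.
Lemma adj2_edges : #|[set p : 'I_2 * 'I_2 | adj2 p.1 p.2]| = (2 - 1).*2.
Proof.
have -> : [set p : 'I_2 * 'I_2 | adj2 p.1 p.2] = [set (ord0, o1); (o1, ord0)].
  apply/setP => [[x y]]; rewrite !inE /adj2 /=.
  by case: (ord2 x) => ->; case: (ord2 y) => ->.
by rewrite cards2.
Qed.
Lemma adj2_stable : forall v : 'I_2,
  3 <= #|[set u | adj2 v u]| + #|[set i | pi2 (tleaf G i) == v]|.
Proof.
have awt : tadj w t by rewrite tadj_sym.
move=> v; have -> : #|[set u | adj2 v u]| = 1.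
  have -> : [set u | adj2 v u] = [set~ v] by apply/setP => x; rewrite !inE /adj2 eq_sym.
  by rewrite cardsC1 card_ord.
rewrite add1n ltnS.
case: (ord2 v) => ->.
  have -> : [set i | pi2 (tleaf G i) == ord0] = [set i | tleaf G i \in S t w].
    by apply/setP => i; rewrite [LHS]inE [RHS]inE pi2_0.
  exact: tail_leaves atw.
have -> : [set i | pi2 (tleaf G i) == o1] = [set i | tleaf G i \in S w t].
  by apply/setP => i; rewrite [LHS]inE [RHS]inE pi2_1.
exact: tail_leaves awt.
Qed.

Definition G2 : stree n :=
  @STree n 2 adj2 (fun i => pi2 (tleaf G i)) isT adj2_sym adj2_irr adj2_conn
    adj2_edges adj2_stable.

Lemma contr2 : contraction (G := G) (G' := G2) pi2.
Proof.
have awt : tadj w t by rewrite tadj_sym.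
split.
- move=> x; case: (ord2 x) => ->; [exists t | exists w].
    by apply/eqP; rewrite pi2_0 S_t.
  by apply/eqP; rewrite pi2_1 S_t.
- move=> x u v pu pv; case: (ord2 x) => ex; rewrite ex in pu pv.
    have uS : u \in S t w by rewrite -pi2_0 pu.
    have vS : v \in S t w by rewrite -pi2_0 pv.
    move: (S_restr uS vS); apply: connect_sub => c d /and3P [acd cS dS].
    by apply: connect1; rewrite acd ex !pi2_0 cS dS.
  have uS : u \in S w t by rewrite -pi2_1 pu.
  have vS : v \in S w t by rewrite -pi2_1 pv.
  move: (S_restr uS vS); apply: connect_sub => c d /and3P [acd cS dS].
  by apply: connect1; rewrite acd ex !pi2_1 cS dS.
- move=> x y; split.
    move=> xy; split; first by apply/eqP.
    case: (ord2 x) => ex; case: (ord2 y) => ey; rewrite ex ey in xy *; try by [].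
      by exists t, w; split=> //; apply/eqP; rewrite ?pi2_0 ?pi2_1 S_t.
    by exists w, t; split=> //; apply/eqP; rewrite ?pi2_0 ?pi2_1 S_t.
  by case=> /eqP.
- by [].
Qed.

End Smooth.

Theorem lemma7p3 (n : nat) (a : 'I_n -> rat) :
  weight_data a -> extremal (ZA a) /\ smooth (ZA a).
Proof.
case=> ha atot.
have apos : forall i, (0 <= a i)%R by move=> i; case/andP: (ha i) => /ltW.
split; [split|].
- move=> G; apply/negP => /eqP E.
  have f0 : 'I_(tm G) := Ordinal (tm_gt0 G).
  have := @step1 n G a apos atot [set: _] f0 (in_setT f0).
  case.
  + move=> u v _ _; move: (tconnected u v); apply: connect_sub => x y axy.
    by apply: connect1; rewrite /restr axy !in_setT.
  + by move=> z _; apply/(ZA_S a z); rewrite E in_setT.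
  move=> t [w [atw sub _]]; have := subsetP sub w (in_setT w).
  by rewrite (negbTE (acyclic atw)).
- move=> G G' pi cpi v'; split.
  + by move=> vZ v pv; apply: (forward cpi apos); rewrite pv.
  + exact: (converse cpi apos atot).
- move=> G v vZ; have [t [w [atw vS lS]]] := proj1 (ZA_S a v) vZ.
  exists (@G2 n G t w atw), (@pi2 n G t w); split => //; first exact: (@contr2 n G t w atw).
  have -> : @pi2 n G t w v = ord0 by apply/eqP; rewrite pi2_0.
  apply/(ZA_S a); exists ord0, o1; split => //; first exact: S_t.
  have a01 : tadj (s := @G2 n G t w atw) ord0 o1 by [].
  apply: le_trans lS.
  rewrite [X in (X <= _)%R]big_mkcond [X in (_ <= X)%R]big_mkcond /=.
  apply: ler_sum => i _; rewrite [i \in tail_labels _]inE [i \in tail_labels (S t w)]inE.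
  case: ifP => h; last by case: ifP.
  have : tleaf (@G2 n G t w atw) i != o1.
    by apply: contraTneq h => e; rewrite e (acyclic a01).
  rewrite /= => h2; have : @pi2 n G t w (tleaf G i) == ord0.
    by case: (ord2 (@pi2 n G t w (tleaf G i))) h2 => ->; rewrite ?eqxx.
  by rewrite pi2_0 => ->.
Qed.
About lemma7p3.
Print Assumptions lemma7p3.
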